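(* Suppose that $X\subset U\subset\mathbb{R}^n$, where $U$ is open and $X$ is the closure in $U$ of its interior. Then $\tau^p(X)=X\times\mathcal{P}_p^*$ for all $p\in\mathbb{N}$.
   Context: $\mathcal{P}_p$: real polynomials on $\mathbb{R}^n$ of degree $\le p$; $\mathcal{P}_p^*$ its dual; $r=\dim\mathcal{P}_p$. For $\xi\in\mathcal{P}_p^*$, $b\in\mathbb{R}^n$, $|\alpha|\le p$: $\xi_\alpha(b):=\xi(\tfrac1{\alpha!}(x-b)^\alpha)$; $\delta_a(P)=P(a)$. A bundle over $X$ with fibres in $W$ is a subset of $X\times W$ whose fibres are linear subspaces. For a bundle $E\subset X\times\mathcal{P}_p^*$: $\Delta E=\{(a,b,\xi+\eta):a,b\in X,\xi\in E_a,\eta\in E_b,|a-b|^{p-|\alpha|}|\eta_\alpha(b)|\le1\ \forall|\alpha|\le p\}$, $E'=\{(a,\xi):(a,a,\xi)\in\overline{\Delta E}\}$ (closure in $X\times X\times\mathcal{P}_p^*$), $\rho(E)=\{(a,\xi):\xi\in\operatorname{Span}E'_a\}$. With $E_0=\{(a,\lambda\delta_a):a\in X,\lambda\in\mathbb{R}\}$, the bundles $\rho^i(E_0)$ coincide for $i\ge2r$, and $\tau^p(X):=\rho^{2r}(E_0)$. *)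

(* Defs.v *)
From HB Require Import structures.
From mathcomp Require Import all_boot all_order all_algebra.
From mathcomp Require Import reals.
From mathcomp Require Import mpoly.
Set Implicit Arguments. Unset Strict Implicit. Unset Printing Implicit Defensive.
Import Order.TTheory GRing.Theory Num.Theory.
Local Open Scope ring_scope.

Notation dual R n p := {ffun 'X_{1..n < p.+1} -> R^o}.

Section Whitney.
Variables (R : realType) (n p : nat).

Definition pt := 'I_n -> R.

Definition edist (a b : pt) : R := Num.sqrt (\sum_(i < n) (a i - b i) ^+ 2).

Definition is_open (U : pt -> Prop) : Prop :=
  forall x, U x -> exists2 e : R, 0 < e & forall y, edist x y < e -> U y.
Definition rn_interior (S : pt -> Prop) : pt -> Prop :=
  fun x => exists2 e : R, 0 < e & forall y, edist x y < e -> S y.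
Definition rn_closure (S : pt -> Prop) : pt -> Prop :=
  fun x => forall e : R, 0 < e -> exists2 y, S y & edist x y < e.

(* Multi-indices alpha with |alpha| <= p : they index the monomial basis of P_p. *)
Definition midx := 'X_{1..n < p.+1}.

Definition rdim : nat := #|{: midx}|.

(* P_p^*, written in the dual coordinates of the monomial basis:
   xi m = xi(x^m).  This is a finite-dimensional real vector space. *)
Local Notation dual := (dual R n p).

Definition dapp (xi : dual) (P : {mpoly R[n]}) : R :=
  \sum_(m : midx) P@_(bmnm m) * xi m.

Definition mfact (a : 'X_{1..n}) : nat := \prod_(i < n) (a i)`!.

Definition xi_at (xi : dual) (a : midx) (b : pt) : R :=
  dapp xi (((mfact (bmnm a))%:R)^-1 *:
             \prod_(i < n) ('X_i - (b i)%:MP) ^+ (bmnm a i)).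

Definition delta (a : pt) : dual := [ffun m : midx => ('X_[bmnm m] : {mpoly R[n]}).@[a]].

(* Norm on P_p^* (all norms equivalent in finite dimension). *)
Definition dnorm (xi : dual) : R := \sum_(m : midx) `|xi m|.

Definition bundle := pt -> dual -> Prop.

Definition DeltaE (X : pt -> Prop) (E : bundle) : pt -> pt -> dual -> Prop :=
  fun a b z => X a /\ X b /\
    exists xi eta, [/\ E a xi, E b eta,
      (forall al : midx, edist a b ^+ (p - mdeg (bmnm al)) * `|xi_at eta al b| <= 1)
      & z = xi + eta].

(* E' : (a, xi) with (a, a, xi) in the closure of Delta E in X x X x P_p^*. *)
Definition Eprime (X : pt -> Prop) (E : bundle) : bundle :=
  fun a xi => X a /\
    forall e : R, 0 < e -> exists a' b' z,
      [/\ DeltaE X E a' b' z, edist a a' < e, edist a b' < e & dnorm (z - xi) < e].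

Definition span_of (S : dual -> Prop) : dual -> Prop :=
  fun xi => exists k (c : 'I_k -> R) (v : 'I_k -> dual),
    (forall i, S (v i)) /\ xi = \sum_(i < k) c i *: v i.

Definition rho (X : pt -> Prop) (E : bundle) : bundle :=
  fun a xi => X a /\ span_of (Eprime X E a) xi.

Definition E0 (X : pt -> Prop) : bundle :=
  fun a xi => X a /\ exists l : R, xi = l *: delta a.

Definition tau (X : pt -> Prop) : bundle := iter (2 * rdim) (rho X) (E0 X).

End Whitney.

(* Main.v *)
Require Import Defs.
From HB Require Import structures.
From mathcomp Require Import all_boot all_order all_algebra.
From mathcomp Require Import reals.
From mathcomp Require Import mpoly.
From mathcomp Require Import zify ring lra.
From Stdlib Require Import Classical FunctionalExtensionality.
Set Implicit Arguments. Unset Strict Implicit. Unset Printing Implicit Defensive.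
Import Order.TTheory GRing.Theory Num.Theory.
Local Open Scope ring_scope.

Section Aux.
Variables (R : realType) (n p : nat).
Local Notation dual := (dual R n p).
Local Notation pt := (pt R n).
Local Notation midx := (midx n p).

Lemma edist_refl (a : pt) : edist a a = 0.
Proof. by rewrite /edist big1 ?sqrtr0 // => i _; rewrite subrr expr0n. Qed.

Lemma dnorm_ge0 (x : dual) : 0 <= dnorm x.
Proof. by apply: sumr_ge0 => m _. Qed.

Lemma dnorm0 : dnorm (0 : dual) = 0.
Proof. by rewrite /dnorm big1 // => m _; rewrite ffunE normr0. Qed.

Lemma dnormD (x y : dual) : dnorm (x + y) <= dnorm x + dnorm y.
Proof.
rewrite /dnorm -big_split /=; apply: ler_sum => m _; rewrite ffunE; exact: ler_normD.
Qed.

Lemma dnormZ c (x : dual) : dnorm (c *: x) = `|c| * dnorm x.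
Proof.
rewrite /dnorm mulr_sumr; apply: eq_bigr => m _; rewrite ffunE normrM //.
Qed.

Lemma dnorm_sum (I : Type) (r : seq I) (F : I -> dual) :
  dnorm (\sum_(i <- r) F i) <= \sum_(i <- r) dnorm (F i).
Proof.
elim: r => [|x r IH]; first by rewrite !big_nil dnorm0.
rewrite !big_cons; apply: le_trans (dnormD _ _) _; exact: lerD.
Qed.

Lemma dapp0 (P : {mpoly R[n]}) : dapp (0 : dual) P = 0.
Proof. by rewrite /dapp big1 // => m _; rewrite ffunE mulr0. Qed.

Lemma dappZ c (xi : dual) P : dapp (c *: xi) P = c * dapp xi P.
Proof.
rewrite /dapp mulr_sumr; apply: eq_bigr => m _; rewrite ffunE /=.
by rewrite mulrCA.
Qed.

Lemma xi_at0 (al : midx) b : xi_at (0 : dual) al b = 0.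
Proof. exact: dapp0. Qed.


Lemma msizeM_le' (P Q : {mpoly R[n]}) a b :
  (msize P <= a.+1)%N -> (msize Q <= b.+1)%N -> (msize (P * Q) <= (a + b).+1)%N.
Proof.
have [->|nP] := eqVneq P 0; first by rewrite mul0r msize0.
have [->|nQ] := eqVneq Q 0; first by rewrite mulr0 msize0.
rewrite msizeM // => hP hQ.
rewrite -subn1; rewrite leq_subLR add1n; apply: leq_trans (leq_add hP hQ) _; by rewrite addSn addnS.
Qed.

Lemma msize_prod_pow (r : seq 'I_n) (F : 'I_n -> {mpoly R[n]}) (e : 'I_n -> nat) :
  (forall i, (msize (F i) <= 2)%N) ->
  (msize (\prod_(i <- r) F i ^+ e i) <= (\sum_(i <- r) e i).+1)%N.
Proof.
move=> hF; elim: r => [|x r IH]; first by rewrite !big_nil msize1.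
rewrite !big_cons. suff hx : (msize (F x ^+ e x) <= (e x).+1)%N.
  by have := msizeM_le' hx IH.
elim: (e x) => [|k IHk]; first by rewrite expr0 msizeC oner_neq0.
by rewrite exprS; have := msizeM_le' (hF x) IHk.
Qed.

Lemma msize_XsubC i c : (msize ('X_i - c%:MP : {mpoly R[n]}) <= 2)%N.
Proof.
apply: leq_trans (msizeD_le _ _) _; rewrite msizeN msizeX mdeg1 geq_max leqnn /=.
by rewrite msizeC; case: (c != 0).
Qed.

Lemma dapp_delta (b : pt) (Q : {mpoly R[n]}) : (msize Q <= p.+1)%N ->
  dapp (delta p b) Q = Q.@[b].
Proof.
move=> hQ; rewrite {2}(mpolywE hQ) /dapp.
rewrite (big_morph _ (@mevalD _ _ b) (@meval0 _ _ b)).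
by apply: eq_bigr => m _; rewrite ffunE mevalZ.
Qed.

Lemma mevalXn (v : pt) (P : {mpoly R[n]}) k : (P ^+ k).@[v] = P.@[v] ^+ k.
Proof.
elim: k => [|k IH]; first by rewrite !expr0 meval1.
by rewrite !exprS (@mevalM n R v) IH.
Qed.

Lemma xi_at_delta (b : pt) (al : midx) mu :
  xi_at (mu *: delta p b) al b = mu * (bmnm al == 0%MM)%:R.
Proof.
rewrite /xi_at dappZ dapp_delta; last first.
  apply: leq_trans (msizeZ_le _ _) _; apply: leq_trans (msize_prod_pow _ _ _) _.
    by move=> i; exact: msize_XsubC.
  by have := bmdeg al; rewrite mdegE.
congr (_ * _). rewrite (@mevalZ n R b).
rewrite (big_morph _ (@mevalM _ _ b) (@meval1 _ _ b)).
have [al0|alN0] := eqVneq (bmnm al) 0%MM.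
  rewrite al0 /mfact big1 ?invr1 ?mul1r; last by move=> i _; rewrite mnm0E.
  by rewrite big1 // => i _; rewrite mnm0E expr0 meval1.
apply/eqP; rewrite mulf_eq0; apply/orP; right.
have [i hi] : exists i, bmnm al i != 0%N.
  apply/existsP; apply: contraNT alN0; rewrite negb_exists => /forallP h.
  by apply/eqP/mnmP => i; rewrite mnm0E; have := h i; rewrite negbK => /eqP.
rewrite (bigD1 i) //= mulf_eq0; apply/orP; left.
rewrite mevalXn (@mevalB n R b) (@mevalC n R b) mevalXU subrr expr0n.
by rewrite (negbTE hi).
Qed.

End Aux.

Section Bund.
Variables (R : realType) (n p : nat) (X : pt R n -> Prop).
Local Notation dual := (dual R n p).
Local Notation pt := (pt R n).
Local Notation midx := (midx n p).

Definition good (E : bundle R n p) :=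
  [/\ (forall a xi, E a xi -> X a), (forall a, X a -> E a 0),
      (forall a x y, E a x -> E a y -> E a (x + y)) &
      (forall a c x, E a x -> E a (c *: x))].

Lemma span_add (S : dual -> Prop) x y : span_of S x -> span_of S y -> span_of S (x + y).
Proof.
move=> [k1 [c1 [v1 [h1 ->]]]] [k2 [c2 [v2 [h2 ->]]]].
exists (k1 + k2)%N, (fun i => match split i with inl j => c1 j | inr j => c2 j end),
  (fun i => match split i with inl j => v1 j | inr j => v2 j end).
split.
  by move=> i; case: (split i).
rewrite big_split_ord /=; congr (_ + _); apply: eq_bigr => i _.
  by have := unsplitK (inl _ i : 'I_k1 + 'I_k2) => /= ->.
by have := unsplitK (inr _ i : 'I_k1 + 'I_k2) => /= ->.
Qed.

Lemma span_scale (S : dual -> Prop) c x : span_of S x -> span_of S (c *: x).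
Proof.
move=> [k [c1 [v1 [h1 ->]]]]; exists k, (fun i => c * c1 i), v1; split => //.
by rewrite scaler_sumr; apply: eq_bigr => i _; rewrite scalerA.
Qed.

Lemma span0 (S : dual -> Prop) : span_of S 0.
Proof. by exists 0%N, (fun _ => 0), (fun _ => 0); split; [case | rewrite big_ord0]. Qed.

Lemma span1 (S : dual -> Prop) x : S x -> span_of S x.
Proof.
by move=> h; exists 1%N, (fun _ => 1), (fun _ => x); split => //; rewrite big_ord1 scale1r.
Qed.

Lemma good_E0 : good (E0 X).
Proof.
split.
- by move=> a xi [].
- by move=> a Xa; split => //; exists 0; rewrite scale0r.
- by move=> a x y [Xa [l ->]] [_ [l' ->]]; split => //; exists (l + l'); rewrite scalerDl.
- by move=> a c x [Xa [l ->]]; split => //; exists (c * l); rewrite scalerA.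
Qed.

Lemma good_rho E : good (rho X E).
Proof.
split.
- by move=> a xi [].
- by move=> a Xa; split => //; exact: span0.
- by move=> a x y [Xa hx] [_ hy]; split => //; exact: span_add.
- by move=> a c x [Xa hx]; split => //; exact: span_scale.
Qed.

Lemma sub_rho E a xi : good E -> E a xi -> rho X E a xi.
Proof.
move=> [hX h0 _ _] hE; have Xa := hX _ _ hE; split => //; apply: span1.
split => // e e0; exists a, a, (xi + 0); split.
- split => //; split => //; exists xi, 0; split => //; first exact: h0.
  by move=> al; rewrite xi_at0 normr0 mulr0.
- by rewrite edist_refl.
- by rewrite edist_refl.
- by rewrite addr0 subrr dnorm0.
Qed.

Definition G s : bundle R n p := iter s (@rho R n p X) (@E0 R n p X).

Lemma good_G s : good (G s).
Proof. by case: s => [|s]; [exact: good_E0 | exact: good_rho]. Qed.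

Lemma G_mono s t a xi : (s <= t)%N -> G s a xi -> G t a xi.
Proof.
move=> /subnK <-; elim: (t - s)%N => [|k IH] //= h.
by apply: sub_rho; [exact: good_G | exact: IH].
Qed.

End Bund.

Section CC.
Variables (R : realType) (n p : nat).
Local Notation dual := (dual R n p).
Local Notation pt := (pt R n).
Local Notation midx := (midx n p).

Definition qpoly (a h : pt) (m : midx) : {poly R} :=
  \prod_(i < n) ((a i)%:P + h i *: 'X) ^+ (bmnm m i).

Definition cc (a h : pt) (j : nat) : dual := [ffun m => (qpoly a h m)`_j].

Lemma size_qpoly a h m : (size (qpoly a h m) <= p.+1)%N.
Proof.
have hs : forall i, (size ((a i)%:P + h i *: 'X : {poly R})%R <= 2)%N.
  move=> i; apply: leq_trans (size_polyD _ _) _; rewrite geq_max size_polyC.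
  by rewrite (leq_trans (size_scale_leq _ _)) ?size_polyX ?andbT //; case: (a i != 0).
have : (size (qpoly a h m) <= (\sum_(i < n) bmnm m i).+1)%N.
  rewrite /qpoly; elim: (index_enum _) => [|x r IH]; first by rewrite !big_nil size_poly1.
  rewrite !big_cons; apply: leq_trans (size_polyMleq _ _) _.
  have hx : (size (((a x)%:P + h x *: 'X) ^+ bmnm m x)%R <= (bmnm m x).+1)%N.
    apply: leq_trans (size_poly_exp_leq _ _) _; rewrite ltnS.
    by have := hs x; case: (size _) => [|[|[|k]]] //= _; rewrite ?mul0n ?mul1n.
  rewrite -subn1 leq_subLR add1n; apply: leq_trans (leq_add hx IH) _; by rewrite addSn addnS.
move=> /leq_trans; apply; rewrite ltnS; have := bmdeg m; rewrite mdegE.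
by rewrite ltnS.
Qed.

Lemma delta_shift (a h : pt) t :
  delta p (fun i => a i + t * h i) = \sum_(j < p.+1) t ^+ j *: cc a h j.
Proof.
apply/ffunP => m; rewrite sum_ffunE !ffunE mevalX.
transitivity (qpoly a h m).[t].
  rewrite /qpoly horner_prod; apply: eq_bigr => i _.
  by rewrite !hornerE mulrC.
rewrite (horner_coef_wide t (size_qpoly a h m)); apply: eq_bigr => j _.
by rewrite !ffunE mulrC.
Qed.

Lemma cc0 (a h : pt) : cc a h 0 = delta p a.
Proof.
apply/ffunP => m; rewrite !ffunE mevalX -horner_coef0 /qpoly horner_prod.
by apply: eq_bigr => i _; rewrite !hornerE ?mulr0 ?addr0.
Qed.

Lemma cc_big (a h : pt) j : (p < j)%N -> cc a h j = 0.
Proof.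
move=> hj; apply/ffunP => m; rewrite !ffunE nth_default //.
exact: leq_trans (size_qpoly a h m) hj.
Qed.

End CC.

Section Step.
Variables (R : realType) (n p : nat) (X : pt R n -> Prop).
Local Notation dual := (dual R n p).
Local Notation pt := (pt R n).
Local Notation midx := (midx n p).
Local Notation GG := (@G R n p X).

Definition nrm (h : pt) : R := Num.sqrt (\sum_i h i ^+ 2).

Lemma nrm_ge0 h : 0 <= nrm h.
Proof. exact: sqrtr_ge0. Qed.

Lemma edist_shift (a h : pt) t : 0 <= t ->
  edist a (fun i => a i + t * h i) = t * nrm h.
Proof.
move=> t0; rewrite /edist /nrm.
have -> : \sum_(i < n) (a i - (a i + t * h i)) ^+ 2 = t ^+ 2 * \sum_i h i ^+ 2.
  rewrite mulr_sumr; apply: eq_bigr => i _.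
  by rewrite opprD addrA subrr add0r sqrrN exprMn.
by rewrite sqrtrM ?sqr_ge0 // sqrtr_sqr ger0_norm.
Qed.

Lemma G_sum k a (r : seq nat) (F : nat -> dual) : X a ->
  (forall j, j \in r -> GG k a (F j)) -> GG k a (\sum_(j <- r) F j).
Proof.
move=> Xa hF; have [_ h0 hD _] := @good_G R n p X k.
rewrite big_seq; apply: (big_ind (GG k a)) => //; [exact: h0 | move=> x y; exact: hD].
Qed.

Lemma interior_step k (a : pt) rad : 0 < rad -> (forall y, edist a y < rad -> X y) ->
  (forall h, nrm h <= 1 -> forall j, (j <= k)%N -> GG k a (cc p a h j)) ->
  forall h, nrm h <= 1 -> forall j, (j <= k.+1)%N -> GG k.+1 a (cc p a h j).
Proof.
move=> rad0 hball IH h hh j; rewrite leq_eqVlt ltnS => /orP [/eqP -> | hj]; last first.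
  by apply: (@G_mono R n p X k) => //; exact: IH.
have Xa : X a by apply: hball; rewrite edist_refl.
have [_ h0 hD hZ] := @good_G R n p X k.
have [hkp | hkp] := leqP k.+1 p; last first.
  by rewrite cc_big //; have [_ h0' _ _] := @good_G R n p X k.+1; exact: h0'.
split => //; apply: span1; split => // e e0.
pose C := \sum_(i < p.+1) dnorm (cc p a h i) + 1.
have C1 : 1 <= C by rewrite lerDr; apply: sumr_ge0 => i _; exact: dnorm_ge0.
have C0 : 0 < C by apply: lt_le_trans C1.
pose mm := Num.min 1 (Num.min e rad).
have mm0 : 0 < mm by rewrite !lt_min ltr01 e0 rad0.
pose t := mm / (2 * C).
have t0 : 0 < t by rewrite divr_gt0 // mulr_gt0.
have tmm : t <= mm / 2.
  rewrite /t ler_pM2l // lef_pV2 ?posrE ?mulr_gt0 //.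
  by rewrite ler_peMr.
have mm1 : mm <= 1 by rewrite /mm ge_min lexx.
have mme : mm <= e by rewrite /mm !ge_min lexx !orbT.
have mmr : mm <= rad by rewrite /mm !ge_min lexx !orbT.
have tlt : forall x, mm <= x -> t < x.
  move=> x hx; apply: le_lt_trans tmm _; apply: lt_le_trans hx.
  by rewrite ltr_pdivrMr // ltr_pMr // ltr1n.
have t1 : t <= 1 by apply: ltW; apply: tlt.
have tC : t * C < e.
  have -> : t * C = mm / 2 by rewrite /t; field; rewrite gt_eqF.
  by apply: lt_le_trans mme; rewrite ltr_pdivrMr // ltr_pMr // ltr1n.
pose b := fun i => a i + t * h i.
have dab : edist a b <= t.
  rewrite edist_shift; [exact: ler_piMr (ltW t0) hh | exact: ltW].
have Xb : X b by apply: hball; apply: le_lt_trans dab _; apply: tlt.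
pose mu := (t ^+ k.+1)^-1.
have mu0 : 0 < mu by rewrite invr_gt0 exprn_gt0.
pose F := fun j => t ^+ j *: cc p a h j.
exists a, b, (- (mu *: \sum_(j < k.+1) F j) + mu *: delta p b); split.
{ split => //; split => //.
  exists (- (mu *: \sum_(j < k.+1) F j)), (mu *: delta p b); split => //.
  { rewrite -scaleN1r; apply: (hZ); apply: (hZ).
    rewrite -(big_mkord xpredT F); apply: G_sum => // i.
    rewrite mem_index_iota => /andP [_ hi]; apply: (hZ); exact: IH. }
  { apply: (hZ); apply: (@G_mono R n p X 0) => //; split => //; exists 1; by rewrite scale1r. }
  move=> al; rewrite xi_at_delta.
  have [al0|alN0] := eqVneq (bmnm al) 0%MM; last by rewrite mulr0 normr0 mulr0.
  rewrite al0 mulr1 mdeg0 subn0 ger0_norm; last exact: ltW.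
  apply: (@le_trans _ _ (t ^+ p * mu)).
    apply: ler_wpM2r; first exact: ltW.
    by apply: lerXn2r; rewrite ?nnegrE ?sqrtr_ge0 //; exact: ltW.
  rewrite -(subnK hkp) exprD /mu mulfK ?expf_neq0 ?gt_eqF //.
  exact: exprn_ile1 (ltW t0) t1. }
{ by rewrite edist_refl. }
{ by apply: le_lt_trans dab _; apply: tlt. }
have hk2 : (k.+2 <= p.+1)%N by [].
have hsplit : \sum_(j < p.+1) F j =
    \sum_(j < k.+1) F j + F k.+1 + \sum_(k.+2 <= j < p.+1) F j.
  rewrite -!(big_mkord xpredT) (@big_cat_nat _ _ _ k.+1 0 p.+1) //=; last by apply: leqW.
  rewrite (@big_ltn _ _ _ k.+1 p.+1) //; by rewrite addrA.
have hdelta : delta p b = \sum_(j < p.+1) F j := delta_shift p a h t.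
have hF1 : mu *: F k.+1 = cc p a h k.+1.
  by rewrite /F scalerA mulVf ?expf_neq0 ?gt_eqF // scale1r.
rewrite hdelta hsplit !scalerDr hF1 addrA addKr addrAC subrr add0r.
rewrite scaler_sumr; apply: le_lt_trans (dnorm_sum _ _) _.
apply: le_lt_trans tC.
have hC : \sum_(k.+2 <= i < p.+1) dnorm (cc p a h i) <= C.
  rewrite /C -(big_mkord xpredT (fun i => dnorm (cc p a h i))).
  rewrite (@big_cat_nat _ _ _ k.+2 0 p.+1) //=.
  have : 0 <= \sum_(0 <= i < k.+2) dnorm (cc p a h i).
    by apply: sumr_ge0 => i _; exact: dnorm_ge0.
  by move=> hS; rewrite addrAC; apply: ler_wpDl; [exact: addr_ge0 | exact: lexx].
apply: (@le_trans _ _ (t * \sum_(k.+2 <= i < p.+1) dnorm (cc p a h i))); last first.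
  by apply: ler_wpM2l => //; exact: ltW.
rewrite mulr_sumr; apply: ler_sum_nat => l /andP [hj1 hj2].
rewrite /F scalerA dnormZ; apply: ler_wpM2r; first exact: dnorm_ge0.
have hj : (k.+1 <= l)%N by apply: ltnW.
rewrite -(subnK hj) exprD mulrC /mu mulfK ?expf_neq0 ?gt_eqF //.
rewrite ger0_norm; last by apply: exprn_ge0; exact: ltW.
have : (0 < l - k.+1)%N by rewrite subn_gt0.
case: (l - k.+1)%N => [|m] // _.
rewrite exprS; apply: ler_piMr; first exact: ltW.
exact: exprn_ile1 (ltW t0) t1.
Qed.

End Step.

Lemma dig (N a b A B : nat) : (a < N)%N -> (b < N)%N -> (a + N * A = b + N * B)%N -> a = b /\ A = B.
Proof. move=> ha hb e.
have hAB : A = B.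
  have [h|h|h] := ltngtP A B; last by [].
  - have : (N * A.+1 <= N * B)%N by rewrite leq_mul2l h orbT.
    rewrite mulnS; lia.
  - have : (N * B.+1 <= N * A)%N by rewrite leq_mul2l h orbT.
    rewrite mulnS; lia.
subst; split => //; lia.
Qed.

Lemma digits_inj N k (f g : 'I_k -> nat) : (forall i, f i < N)%N -> (forall i, g i < N)%N ->
  (\sum_i f i * N ^ i)%N = (\sum_i g i * N ^ i)%N -> f =1 g.
Proof.
elim: k f g => [|k IH] f g hf hg e i; first by case: i.
move: e; rewrite !big_ord_recl !expn0 !muln1.
have hs : forall (u : 'I_k.+1 -> nat), (\sum_(i < k) u (lift ord0 i) * N ^ (lift ord0 i) =
    N * \sum_(i < k) u (lift ord0 i) * N ^ i)%N.
  by move=> u; rewrite big_distrr; apply: eq_bigr => j _; rewrite lift0 expnS mulnCA.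
rewrite !hs => /dig [] // h0 hr.
have := IH (fun j => f (lift ord0 j)) (fun j => g (lift ord0 j)) (fun j => hf _) (fun j => hg _) hr.
by case: (unliftP ord0 i) => [j ->| ->] // /(_ j).
Qed.

Section Kron.
Variables (R : realType) (n p : nat).
Local Notation pt := (pt R n).
Local Notation midx := (midx n p).

Lemma poly_vanish (v : midx -> R) :
  (forall y : pt, \sum_(m : midx) v m * \prod_(i < n) y i ^+ bmnm m i = 0) ->
  forall m, v m = 0.
Proof.
move=> hv m0.
pose N := p.+1.
pose e := fun m : midx => (\sum_(i < n) bmnm m i * N ^ i)%N.
have hb : forall (m : midx) i, (bmnm m i < N)%N.
  move=> m i; apply: leq_ltn_trans (bmdeg m); rewrite mdegE (bigD1 i) //=.
  exact: leq_addr.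
have einj : forall m m', e m = e m' -> m = m'.
  move=> m m' h; apply: val_inj; apply/mnmP => i.
  exact: (digits_inj (hb m) (hb m') h).
pose Q : {poly R} := \sum_(m : midx) v m *: 'X^(e m).
have hQ : forall s, Q.[s] = 0.
  move=> s; rewrite -(hv (fun i => s ^+ (N ^ i))) horner_sum; apply: eq_bigr => m _.
  rewrite hornerZ hornerXn; congr (_ * _).
  rewrite /e -prodrXr; apply: eq_bigr => i _; by rewrite -exprM mulnC.
have Q0 : Q = 0.
  apply/eqP; apply: contraT => nQ.
  have := max_poly_roots nQ (rs := [seq i%:R | i <- iota 0 (size Q)]).
  rewrite size_map size_iota ltnn; apply.
    by apply/allP => x _; rewrite /root hQ.
  rewrite map_inj_uniq ?iota_uniq //.
  by move=> i j /eqP; rewrite eqr_nat => /eqP.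
have := congr1 (fun q : {poly R} => q`_(e m0)) Q0; rewrite coef0 coef_sum.
rewrite (bigD1 m0) //= big1 => [|m hm]; first by rewrite coefZ coefXn eqxx mulr1 addr0.
rewrite coefZ coefXn; case: eqP => [h|]; last by rewrite mulr0.
by move: hm; rewrite (einj _ _ h) eqxx.
Qed.

End Kron.

Section LA.
Variables (R : realType) (n p : nat).
Local Notation dual := (dual R n p).
Local Notation midx := (midx n p).
Local Notation r := #|{: midx}|.

Definition rv (w : dual) : 'rV[R]_r := \row_(j < r) (w (enum_val j) : R).
Definition of_rv (x : 'rV[R]_r) : dual := [ffun m => (x 0 (enum_rank m) : R^o)].

Lemma of_rvK w : of_rv (rv w) = w.
Proof. by apply/ffunP => m; rewrite !ffunE mxE enum_rankK. Qed.

Lemma pair_rv (w : dual) (K : 'M[R]_r) j :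
  (rv w *m K) 0 j = \sum_(m : midx) w m * K (enum_rank m) j.
Proof.
rewrite mxE (reindex enum_rank); last by apply: onW_bij; exact: enum_rank_bij.
by apply: eq_bigr => m _; rewrite mxE enum_rankK.
Qed.

Lemma span_full (S : dual -> Prop) :
  S 0 -> (forall x y, S x -> S y -> S (x + y)) -> (forall c x, S x -> S (c *: x)) ->
  (forall v : midx -> R, (forall w, S w -> \sum_(m : midx) w m * v m = 0) ->
     forall m, v m = 0) ->
  forall xi, S xi.
Proof.
move=> S0 SD SZ hv.
pose S' := fun x : 'rV[R]_r => S (of_rv x).
have of_rvD : forall x y, of_rv (x + y) = of_rv x + of_rv y.
  by move=> x y; apply/ffunP => m; rewrite !ffunE mxE.
have of_rvZ : forall c x, of_rv (c *: x) = c *: of_rv x.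
  by move=> c x; apply/ffunP => m; rewrite !ffunE mxE.
have of_rv0 : of_rv 0 = 0 by apply/ffunP => m; rewrite !ffunE mxE.
have inspan : forall k (A : 'M[R]_(k, r)), (forall i, S' (row i A)) ->
    forall x, (x <= A)%MS -> S' x.
  move=> k A hA x /submxP [D ->]; rewrite mulmx_sum_row /S'.
  rewrite (big_morph _ of_rvD of_rv0); apply: big_ind => //.
  by move=> i _; rewrite of_rvZ; apply: SZ; exact: hA.
have ext : forall t k (A : 'M[R]_(k, r)), (r - \rank A <= t)%N ->
    (forall i, S' (row i A)) ->
    exists k' (B : 'M[R]_(k', r)), (forall i, S' (row i B)) /\
      forall w, S w -> (rv w <= B)%MS.
  elim=> [|t IH] k A hr hA.
    exists k, A; split => // w _; apply: submx_full.
    by rewrite /row_full eqn_leq rank_leq_col /= -subn_eq0 -leqn0.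
  case: (Classical_Prop.classic (forall w, S w -> (rv w <= A)%MS)) => [hall|].
    by exists k, A.
  move=> /Classical_Pred_Type.not_all_ex_not [w hw].
  have [Sw nw] := Classical_Prop.imply_to_and _ _ hw.
  pose B := col_mx (rv w) A.
  apply: (IH _ B).
    have hlt : (\rank A < \rank B)%N.
      rewrite /B -addsmxE.
      have := mxrank_leqif_sup (addsmxSr (rv w) A).
      move=> /leqif_eq; rewrite ltn_neqAle => ->; rewrite andbT.
      apply/negP => /eqP e; apply: nw.
      have := mxrank_leqif_sup (addsmxSr (rv w) A) => /leqifP.
      by rewrite e ltnn; case: ifP => // h _; apply: submx_trans (addsmxSl _ _) h.
    have := rank_leq_col B; move: hr hlt; lia.
  move=> i; rewrite /B -(splitK i); case: (split i) => j /=.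
    by rewrite rowKu row_id /S' of_rvK.
  by rewrite rowKd; exact: hA.
have [k [B [hB hall]]] := ext r 0%N (0 : 'M[R]_(0, r)) (leq_subr _ _) (fun i => match i with Ordinal _ h => False_ind _ (notF h) end).
have [full|nfull] := boolP (row_full B).
  by move=> xi; rewrite -(of_rvK xi); apply: (inspan _ _ hB); exact: submx_full.
exfalso; pose K := cokermx B.
have K0 : K = 0.
  apply/matrixP => l j; rewrite [RHS]mxE.
  rewrite -(enum_valK l); apply: (hv (fun m => K (enum_rank m) j) _ (enum_val l)).
  move=> w Sw; have /submxP [D hD] := hall w Sw.
  by rewrite -pair_rv hD -mulmxA mulmx_coker mulmx0 mxE.
move: nfull; rewrite /row_full; have := mxrank_coker B; rewrite -/K K0 mxrank0.
have := rank_leq_col B; lia.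
Qed.

End LA.

Section Main.
Variables (R : realType) (n p : nat) (X : pt R n -> Prop).
Local Notation dual := (dual R n p).
Local Notation pt := (pt R n).
Local Notation midx := (midx n p).
Local Notation GG := (@G R n p X).

Lemma interior_all (a : pt) rad : 0 < rad -> (forall y, edist a y < rad -> X y) ->
  forall k h, nrm h <= 1 -> forall j, (j <= k)%N -> GG k a (cc p a h j).
Proof.
move=> rad0 hball; elim=> [|k IH].
  move=> h _ j; rewrite leqn0 => /eqP ->; rewrite cc0.
  split; first by apply: hball; rewrite edist_refl.
  by exists 1; rewrite scale1r.
exact: interior_step rad0 hball IH.
Qed.

Lemma full_of_cc s (a : pt) : X a ->
  (forall h, nrm h <= 1 -> forall j, (j <= p)%N -> GG s a (cc p a h j)) ->
  forall xi, GG s a xi.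
Proof.
move=> Xa hcc; have [_ h0 hD hZ] := @good_G R n p X s.
apply: span_full; [exact: h0 | exact: hD a | exact: hZ a |].
move=> v hv; apply: poly_vanish => y.
pose d := fun i => y i - a i.
pose L := nrm d + 1.
have L0 : 0 < L by rewrite /L ltr_wpDl ?nrm_ge0.
pose h := fun i => d i / L.
have hy : (fun i => a i + L * h i) = y.
  by apply: functional_extensionality => i; rewrite /h mulrC divfK ?gt_eqF // /d addrC subrK.
have hnrm : nrm h <= 1.
  have := edist_shift a h (ltW L0); rewrite hy => e.
  have : L * nrm h <= L * 1.
    rewrite -e mulr1 /edist /L /nrm /d; apply: ler_wpDr => //.
    rewrite le_eqVlt; apply/orP; left; apply/eqP; congr Num.sqrt.
    by apply: eq_bigr => i _; rewrite -sqrrN opprB.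
  by rewrite ler_pM2l.
have Gy : GG s a (delta p y).
  rewrite -hy delta_shift; apply: big_ind => //; first exact: h0.
    by move=> x1 x2; exact: hD.
  move=> j _; apply: hZ; apply: hcc => //; rewrite -ltnS; exact: ltn_ord.
transitivity (\sum_(m : midx) delta p y m * v m); last exact: hv _ Gy.
by apply: eq_bigr => m _; rewrite ffunE mevalX mulrC.
Qed.

Lemma boundary s (a : pt) :
  (forall x, X x -> rn_closure (rn_interior X) x) -> X a ->
  (forall a', rn_interior X a' -> forall xi, GG s a' xi) ->
  forall xi, GG s.+1 a xi.
Proof.
move=> hX Xa hint xi; have [_ h0 _ _] := @good_G R n p X s.
split => //; apply: span1; split => // e e0.
have [y hy dy] := hX a Xa e e0.
have Xy : X y by case: hy => r r0 hr; apply: hr; rewrite edist_refl.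
exists y, y, (xi + 0); split => //.
- split => //; split => //; exists xi, 0; split => //; first exact: hint.
    exact: h0.
  by move=> al; rewrite xi_at0 normr0 mulr0.
- by rewrite addr0 subrr dnorm0.
Qed.

End Main.

Unset Implicit Arguments.
Set Strict Implicit.

Theorem lemma4p20 (R : realType) (n : nat) (X U : pt R n -> Prop) :
  is_open U ->
  (forall x, X x -> U x) ->
  (forall x, X x <-> (U x /\ rn_closure (rn_interior X) x)) ->
  forall p : nat, forall (a : pt R n) (xi : dual R n p),
    @tau R n p X a xi <-> X a.
Proof.
move=> _ _ hX p a xi.
have hX' : forall x, X x -> rn_closure (rn_interior X) x by move=> x /hX [].
split.
  by have [hG _ _ _] := @good_G R n p X (2 * rdim n p); exact: hG.
move=> Xa.
pose s0 := if (n == 0)%N then 0%N else p.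
have hint : forall a', rn_interior X a' -> forall xi, @G R n p X s0 a' xi.
  move=> a' [rad rad0 hball].
  have Xa' : X a' by apply: hball; rewrite edist_refl.
  apply: full_of_cc => // h hh j hj.
  rewrite /s0; case: ifP => [/eqP n0 | _]; last exact: interior_all rad0 hball _ _ hh _ hj.
  case: j hj => [|j] hj.
    by rewrite cc0; split => //; exists 1; rewrite scale1r.
  have -> : cc p a' h j.+1 = 0.
    apply/ffunP => m; rewrite !ffunE /qpoly big1 ?coef1 //.
    by case=> i hi; exfalso; move: hi; rewrite n0.
  by split => //; exists 0; rewrite scale0r.
have h1 := boundary hX' Xa hint xi.
apply: (G_mono (s := s0.+1)) h1.
rewrite /s0 /rdim; case: ifP => [_|/negbT n0].
  have m0 : midx n p := bm0.
  by rewrite muln_gt0 /=; apply/card_gt0P; exists m0.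
have n0' : (0 < n)%N by rewrite lt0n.
pose i0 : 'I_n := Ordinal n0'.
have hlt : forall j : 'I_p.+1, (mdeg (U_(i0) *+ j)%MM < p.+1)%N.
  by move=> j; rewrite mdegMn mdeg1 mul1n ltn_ord.
pose f := fun j : 'I_p.+1 => @BMultinom n p.+1 (U_(i0) *+ j)%MM (hlt j).
have finj : injective f.
  move=> j j' /(congr1 (fun m : midx n p => bmnm m i0)) /=.
  by rewrite !mulmnE mnm1E eqxx !mul1n => /ord_inj.
have := leq_card f finj; rewrite card_ord => hc.
by apply: leq_trans hc _; apply: leq_pmull.
Qed.
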